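(* If there exists a $1$-perfect code in $H(q+1,q)$, then the vertex set of $H(q,q)$ can be partitioned into distance-$2$ MDS codes $M^0,\dots,M^{q-1}$ such that each $M^i$ is a union of $q$ pairwise disjoint distance-$3$ MDS codes.
   Context: The Hamming graph $H(n,q)$ has vertex set $\mathbb{Z}_q^n$ with the Hamming distance $d$ (number of differing coordinates); vertices at distance $1$ are adjacent. A distance-$d$ MDS code in $H(n,q)$ is a set of $q^{n-d+1}$ vertices with pairwise Hamming distance at least $d$. A $1$-perfect code in $H(n,q)$ is a set $C$ of vertices such that every ball $\{y: d(x,y)\le1\}$ contains exactly one element of $C$. *)

(* Defs.v *)
From mathcomp Require Import all_boot.
Set Implicit Arguments. Unset Strict Implicit. Unset Printing Implicit Defensive.

Definition vertex (n q : nat) := {ffun 'I_n -> 'I_q}.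

Definition hdist (n q : nat) (x y : vertex n q) : nat := #|[set i | x i != y i]|.

Definition is_MDS_code (n q d : nat) (C : {set vertex n q}) : Prop :=
  #|C| = q ^ (n.+1 - d) /\
  (forall x y, x \in C -> y \in C -> x != y -> d <= hdist x y).

Definition is_1perfect_code (n q : nat) (C : {set vertex n q}) : Prop :=
  forall x : vertex n q, #|[set c in C | hdist x c <= 1]| = 1.

(* Main.v *)
Require Import Defs.
From mathcomp Require Import all_boot.
From mathcomp Require Import ssralg zmodp.
Set Implicit Arguments. Unset Strict Implicit. Unset Printing Implicit Defensive.
Import GRing.Theory.

Section H.
Variables n q : nat.
Implicit Types x y : vertex n q.

Lemma hdist_sym x y : hdist x y = hdist y x.
Proof. rewrite /hdist; apply: eq_card => i; by rewrite !inE eq_sym. Qed.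

Lemma hdist0P x y : hdist x y = 0 -> x = y.
Proof.
move/cards0_eq => H; apply/ffunP => i; apply/eqP; apply/negPn; apply/negP => Hi.
have : i \in [set i | x i != y i] by rewrite inE.
by rewrite H inE.
Qed.

Lemma hdist_agree2 x y a b :
  (forall i, i != a -> i != b -> x i = y i) -> hdist x y <= 2.
Proof.
move=> H; rewrite /hdist; apply: leq_trans (_ : #|[set a; b]| <= 2).
  apply: subset_leq_card; apply/subsetP => i; rewrite !inE => Hi.
  case: (eqVneq i a) => [_|ha] //=.
  case: (eqVneq i b) => [_|hb] //=.
  by rewrite H // eqxx in Hi.
by rewrite cards2; case: (a != b).
Qed.

Lemma hdist1_uniq x y i k : hdist x y <= 1 -> x i != y i -> k != i -> x k = y k.
Proof.
move=> H1 Hi Hk; apply/eqP; apply/negPn/negP => Hk'.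
have : #|[set i; k]| <= hdist x y.
  apply: subset_leq_card; apply/subsetP => j; rewrite !inE.
  by case/orP => /eqP ->.
by rewrite cards2 eq_sym Hk => H2; have := leq_trans H2 H1.
Qed.

Lemma exists_diff x y : x != y -> exists i, x i != y i.
Proof.
move=> Hne; apply/existsP; apply: contraR Hne => /existsPn H.
apply/eqP/ffunP => i; apply/eqP; by move: (H i); rewrite negbK.
Qed.

Lemma perfect_dist3 (C : {set vertex n q}) : is_1perfect_code C ->
  forall c c', c \in C -> c' \in C -> c != c' -> 3 <= hdist c c'.
Proof.
move=> HP c c' Hc Hc' Hne; rewrite leqNgt; apply/negP => Hlt.
have [i Hi] := exists_diff Hne.
pose x : vertex n q := [ffun k => if k == i then c' i else c k].
have h1 : hdist x c <= 1.
  rewrite /hdist -(cards1 i); apply: subset_leq_card.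
  apply/subsetP => k; rewrite !inE ffunE.
  by case: (eqVneq k i) => [->|hk]; rewrite ?eqxx.
have h2 : hdist x c' <= 1.
  have : #|[set k | c k != c' k] :\ i| <= 1.
    move: Hlt; rewrite /hdist (cardsD1 i) inE Hi //.
  apply: leq_trans; apply: subset_leq_card; apply/subsetP => k.
  rewrite !inE ffunE; case: (eqVneq k i) => [->|hk] /=; first by rewrite eqxx.
  done.
have := HP x.
have : #|[set c; c']| <= #|[set c0 in C | hdist x c0 <= 1]|.
  apply: subset_leq_card; apply/subsetP => k; rewrite !inE.
  by case/orP => /eqP ->; rewrite ?Hc ?Hc' ?h1 ?h2.
by rewrite cards2 Hne => H E; rewrite E in H.
Qed.

End H.

Lemma card_bigcup_disj (T : finType) (I : finType) (F : I -> {set T}) :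
  (forall i j, i != j -> [disjoint F i & F j]) -> #|\bigcup_i F i| = \sum_i #|F i|.
Proof.
move=> H; rewrite -sum1_card partition_disjoint_bigcup //.
by apply: eq_bigr => i _; rewrite sum1_card.
Qed.

Lemma perfect_cover q (C : {set vertex q.+1 q}) : is_1perfect_code C ->
  forall (a b : 'I_q.+1) (z : vertex q.+1 q), a != b ->
  exists2 c, c \in C & forall i, i != a -> i != b -> c i = z i.
Proof.
move=> HP a b z hab; have D3 := perfect_dist3 HP.
have q0 : 0 < q := leq_ltn_trans (leq0n _) (ltn_ord (z a)).
case: (boolP [exists c in C, [forall i, ((i != a) && (i != b)) ==> (c i == z i)]]).
  case/exists_inP => c Hc /forallP H; exists c => // i ha hb.
  by move: (H i); rewrite ha hb => /eqP.
move/exists_inPn => Hno; exfalso.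
have ball : forall x, exists2 c, c \in C & hdist x c <= 1.
  move=> x; have /eqP/cards1P [c Hc] := HP x.
  have : c \in [set c0 in C | hdist x c0 <= 1] by rewrite Hc set11.
  by rewrite inE => /andP[h1 h2]; exists c.
pose w (u v : 'I_q) : vertex q.+1 q :=
  [ffun k => if k == a then u else if k == b then v else z k].
pose f u v := odflt z [pick c in C | hdist (w u v) c <= 1].
have fP : forall u v, f u v \in C /\ hdist (w u v) (f u v) <= 1.
  move=> u v; rewrite /f; case: pickP => [c /andP[]//|H] /=.
  by case: (ball (w u v)) => c Hc Hd; have := H c; rewrite Hc Hd.
have wz : forall u v k, k != a -> k != b -> w u v k = z k.
  by move=> u v k ha hb; rewrite ffunE (negbTE ha) (negbTE hb).
pose idx u v := odflt a [pick i | (i != a) && (i != b) && (f u v i != z i)].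
have idxP : forall u v,
    [&& idx u v != a, idx u v != b & f u v (idx u v) != z (idx u v)].
  move=> u v; rewrite /idx; case: pickP => [i /andP[/andP[-> ->] ->] //|H] /=.
  have := Hno (f u v) (fP u v).1; case/forallPn => i.
  rewrite negb_imply => /andP[hi hzi].
  by have := H i; rewrite hi hzi.
have fa : forall u v, f u v a = u.
  move=> u v; apply/eqP; apply/negPn/negP => hne.
  case/and3P: (idxP u v) => h1 h2 h3.
  have hw : w u v a != f u v a by rewrite ffunE eqxx eq_sym.
  have E := hdist1_uniq (fP u v).2 hw h1.
  by rewrite wz // in E; rewrite E eqxx in h3.
have fb : forall u v, f u v b = v.
  move=> u v; apply/eqP; apply/negPn/negP => hne.
  case/and3P: (idxP u v) => h1 h2 h3.
  have hw : w u v b != f u v b by rewrite ffunE [b == a]eq_sym (negbTE hab) eqxx eq_sym.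
  have E := hdist1_uniq (fP u v).2 hw h2.
  by rewrite wz // in E; rewrite E eqxx in h3.
have agr : forall u v k, k != a -> k != b -> k != idx u v -> f u v k = z k.
  move=> u v k ha hb hk; case/and3P: (idxP u v) => h1 h2 h3.
  have hw : w u v (idx u v) != f u v (idx u v) by rewrite wz // eq_sym.
  by rewrite -(hdist1_uniq (fP u v).2 hw hk) wz.
pose g (p : 'I_q * 'I_q) := (idx p.1 p.2, f p.1 p.2 (idx p.1 p.2)).
have ginj : injective g.
  move=> [u v] [u' v'] /= [Ei Ef].
  have H2 : hdist (f u v) (f u' v') <= 2.
    apply: (hdist_agree2 (a := a) (b := b)) => k ha hb.
    case: (eqVneq k (idx u v)) => [->|hk]; first by rewrite Ef Ei.
    by rewrite !agr // -Ei.
  have eqf : f u v = f u' v'.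
    apply/eqP; apply/negPn/negP => hne.
    have := D3 _ _ (fP u v).1 (fP u' v').1 hne.
    by rewrite leqNgt ltnS H2.
  have h1 := fa u v; have h2 := fb u v; rewrite eqf fa fb in h1 h2; by rewrite h1 h2.
pose A := [set p : 'I_q.+1 * 'I_q | (p.1 != a) && (p.1 != b) && (p.2 != z p.1)].
have sub : g @: [set: 'I_q * 'I_q] \subset A.
  apply/subsetP => _ /imsetP[p _ ->]; rewrite inE /=.
  by case/and3P: (idxP p.1 p.2) => -> -> /=; rewrite eq_sym.
have cS : #|g @: [set: 'I_q * 'I_q]| = q * q by rewrite card_imset // cardsT card_prod card_ord.
have cA : #|A| = \sum_(i | (i != a) && (i != b)) \sum_(x | x != z i) 1.
  rewrite pair_big_dep /= -sum1_card; apply: eq_bigl => p; by rewrite inE.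
have cA2 : #|A| = (q - 1) * q.-1.
  rewrite cA (eq_bigr (fun _ => q.-1)); last first.
    move=> i _; rewrite -[q in q.-1](card_ord q) -(cardC1 (z i)) -sum1_card.
    by apply: eq_bigl => x; rewrite !inE.
  rewrite sum_nat_const.
  congr (_ * _).
  have -> : #|[pred i | (i != a) && (i != b)]| = #|[set~ a] :\ b|.
    by apply: eq_card => i; rewrite !inE andbC.
  have := cardsD1 b [set~ a]; rewrite cardsC1 card_ord !inE eq_sym hab /=.
  move: #|_ :\ _| => k E; by rewrite E add1n subn1.
have := subset_leq_card sub; rewrite cS cA2 leqNgt; move/negP; apply.
by apply: ltn_mul; [rewrite subn1|]; rewrite ltn_predL.
Qed.

Section Main.
Variable p : nat.
Variable C : {set vertex p.+2 p.+1}.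
Hypothesis HP : is_1perfect_code C.

Let D3 := perfect_dist3 HP.

Definition wd : 'I_p.+1 -> 'I_p.+2 := widen_ord (leqnSn p.+1).
Definition pi (c : vertex p.+2 p.+1) : vertex p.+1 p.+1 := [ffun k => c (wd k)].
Definition sh (i : 'I_p.+1) (y : vertex p.+1 p.+1) : vertex p.+1 p.+1 :=
  [ffun k => if k == ord0 then (y k + i)%R else y k].

Lemma wd_inord (k : 'I_p.+2) : k != ord_max -> wd (inord k) = k.
Proof.
move=> hk; apply: val_inj => /=; rewrite inordK //.
have := ltn_ord k; rewrite ltnS leq_eqVlt => /orP[/eqP E|//].
by case/eqP: hk; apply: val_inj.
Qed.

Lemma wd_max k : wd k != ord_max.
Proof. by rewrite -(inj_eq val_inj) /= neq_ltn ltn_ord. Qed.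

Lemma wd_0 k : (wd k == ord0) = (k == ord0).
Proof. by rewrite -(inj_eq val_inj) /= -(inj_eq val_inj). Qed.

Lemma inord_wd k : inord (wd k) = k :> 'I_p.+1.
Proof. by apply: val_inj; rewrite /= inordK. Qed.

Lemma sh_inj i : injective (sh i).
Proof.
move=> x y /ffunP E; apply/ffunP => k; have := E k; rewrite !ffunE.
by case: ifP => _ // /addIr.
Qed.

Lemma hdist_sh i x y : hdist (sh i x) (sh i y) = hdist x y.
Proof.
rewrite /hdist; apply: eq_card => k; rewrite !inE !ffunE.
by case: ifP => _ //; rewrite (inj_eq (addIr i)).
Qed.

Lemma hdist_pi c c' : hdist c c' <= (c ord_max != c' ord_max) + hdist (pi c) (pi c').
Proof.
rewrite /hdist.
have sub : [set k | c k != c' k] \subset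
    [set k | (k == ord_max) && (c k != c' k)] :|: wd @: [set k | pi c k != pi c' k].
  apply/subsetP => k; rewrite !inE => hk.
  case: (eqVneq k ord_max) => [E|hm] /=; first by rewrite hk.
  apply/imsetP; exists (inord k); last by rewrite wd_inord.
  by rewrite inE !ffunE wd_inord.
apply: (leq_trans (subset_leq_card sub)); rewrite cardsU.
apply: (leq_trans (leq_subr _ _)); apply: leq_add; last exact: leq_imset_card.
case: (eqVneq (c ord_max) (c' ord_max)) => [E|E] /=.
  rewrite leqn0 cards_eq0; apply/eqP/setP => k; rewrite !inE.
  by case: eqP => // ->; rewrite E eqxx.
rewrite -(cards1 (@ord_max p.+1)); apply: subset_leq_card; apply/subsetP => k.
by rewrite !inE => /andP[].
Qed.


Lemma eqC_off (a b : 'I_p.+2) c c' : c \in C -> c' \in C ->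
  (forall k, k != a -> k != b -> c k = c' k) -> c = c'.
Proof.
move=> Hc Hc' H; apply/eqP; apply/negPn/negP => hne.
by have := D3 Hc Hc' hne; rewrite leqNgt ltnS (hdist_agree2 H).
Qed.

Lemma pi_eq_off c c' : (forall k, k != ord0 -> pi c k = pi c' k) ->
  forall k, k != ord0 -> k != ord_max -> c k = c' k.
Proof.
move=> H k h0 hm; rewrite -(wd_inord hm); have := H (inord k).
rewrite !ffunE; apply; by rewrite -wd_0 wd_inord.
Qed.

Lemma shpi_inj i : {in C &, injective (fun c => sh i (pi c))}.
Proof.
move=> c c' Hc Hc' /sh_inj E; apply: (eqC_off (a := ord_max) (b := ord_max)) => // k hk _.
by rewrite -(wd_inord hk); have := congr1 (fun f : vertex p.+1 p.+1 => f (inord k)) E; rewrite !ffunE.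
Qed.

Definition M i := [set sh i (pi c) | c in C].
Definition Cj j := [set c in C | c ord_max == j].
Definition N i j := [set sh i (pi c) | c in Cj j].

Lemma M_disj i j : i != j -> [disjoint M i & M j].
Proof.
move=> hij; rewrite disjoints_subset; apply/subsetP => y /imsetP[c Hc ->].
rewrite inE; apply/negP => /imsetP[c' Hc' E].
have Ek : forall k, k != ord0 -> pi c k = pi c' k.
  by move=> k hk; have := congr1 (fun f : vertex p.+1 p.+1 => f k) E; rewrite !ffunE (negbTE hk).
have cc : c = c' := eqC_off Hc Hc' (pi_eq_off Ek).
have := congr1 (fun f : vertex p.+1 p.+1 => f ord0) E; rewrite !ffunE eqxx cc => /addrI eij.
by rewrite eij eqxx in hij.
Qed.

Lemma M_cover : \bigcup_(i < p.+1) M i = [set: vertex p.+1 p.+1].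
Proof.
apply/setP => y; rewrite inE; apply/bigcupP.
pose z : vertex p.+2 p.+1 := [ffun k : 'I_p.+2 => y (inord k)].
have [c Hc Hcz] := perfect_cover HP (a := ord0) (b := ord_max) z isT.
exists (y ord0 - pi c ord0)%R => //; apply/imsetP; exists c => //.
apply/ffunP => k; rewrite !ffunE; case: (eqVneq k ord0) => [->|hk].
  by rewrite addrC subrK.
rewrite Hcz ?wd_max ?wd_0 // ffunE inord_wd //.
Qed.

Lemma card_M i : #|M i| = #|C|.
Proof. exact: card_in_imset (@shpi_inj i). Qed.

Lemma cardC : #|C| = p.+1 ^ p.
Proof.
have := card_bigcup_disj M_disj; rewrite M_cover cardsT card_ffun !card_ord.
rewrite (eq_bigr (fun _ => #|C|)); last by move=> i _; exact: card_M.
rewrite sum_nat_const card_ord expnS => /eqP; rewrite eqn_pmul2l // => /eqP.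
by move->.
Qed.


Lemma M_dist i x y : x \in M i -> y \in M i -> x != y -> 2 <= hdist x y.
Proof.
case/imsetP => c Hc ->; case/imsetP => c' Hc' -> hne.
have ncc : c != c' by apply: contraNneq hne => ->.
rewrite hdist_sh; have h1 := D3 Hc Hc' ncc; have h2 := hdist_pi c c'.
have h3 := leq_trans h1 h2; move: h3; case: (_ != _) => /= h3.
  by rewrite -(leq_add2l 1).
exact: leq_trans h3.
Qed.

Lemma N_dist i j x y : x \in N i j -> y \in N i j -> x != y -> 3 <= hdist x y.
Proof.
case/imsetP => c; rewrite inE => /andP[Hc /eqP Ej] ->.
case/imsetP => c'; rewrite inE => /andP[Hc' /eqP Ej'] -> hne.
have ncc : c != c' by apply: contraNneq hne => ->.
rewrite hdist_sh; have h1 := D3 Hc Hc' ncc; have h2 := hdist_pi c c'.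
by rewrite Ej Ej' eqxx /= in h2; exact: leq_trans h1 h2.
Qed.

Lemma N_disj i j k : j != k -> [disjoint N i j & N i k].
Proof.
move=> hjk; rewrite disjoints_subset; apply/subsetP => y /imsetP[c].
rewrite inE => /andP[Hc /eqP Ej] ->.
rewrite inE; apply/negP => /imsetP[c']; rewrite inE => /andP[Hc' /eqP Ek] E.
have cc := shpi_inj Hc Hc' E.
by rewrite -Ej -Ek cc eqxx in hjk.
Qed.

Lemma M_N i : M i = \bigcup_(j < p.+1) N i j.
Proof.
apply/setP => x; apply/imsetP/bigcupP.
  case=> c Hc ->; exists (c ord_max) => //; apply/imsetP; exists c => //.
  by rewrite inE Hc eqxx.
case=> j _ /imsetP[c]; rewrite inE => /andP[Hc _] ->; by exists c.
Qed.

Lemma card_N i j : #|N i j| = #|Cj j|.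
Proof.
apply: card_in_imset => c c'; rewrite !inE => /andP[Hc _] /andP[Hc' _].
exact: shpi_inj.
Qed.

Lemma Cj_le j j' : 0 < p -> #|Cj j| <= #|Cj j'|.
Proof.
move=> hp; pose b : 'I_p.+2 := inord p.
have hb0 : ord0 != b.
  by rewrite -(inj_eq val_inj) /= inordK // eq_sym -lt0n.
have hbm : b != ord_max.
  by rewrite -(inj_eq val_inj) /= inordK // neq_ltn ltnSn.
pose zz (c : vertex p.+2 p.+1) : vertex p.+2 p.+1 :=
  [ffun k => if k == ord_max then j' else c k].
pose phi c := odflt c [pick c' in C | [forall k, (k != ord0) ==> (k != b) ==> (c' k == zz c k)]].
have phiP : forall c, phi c \in C /\ forall k, k != ord0 -> k != b -> phi c k = zz c k.
  move=> c; rewrite /phi; case: pickP => [c' /andP[Hc' /forallP H]|H] /=.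
    split=> // k h0 hb; by move: (H k); rewrite h0 hb => /eqP.
  have [c' Hc' Hz] := perfect_cover HP (zz c) hb0.
  have := H c'; rewrite Hc' /=; move/negP; case; apply/forallP => k.
  by apply/implyP => h0; apply/implyP => hb; rewrite Hz.
have inj : {in Cj j &, injective phi}.
  move=> c1 c2; rewrite !inE => /andP[Hc1 /eqP E1] /andP[Hc2 /eqP E2] E.
  apply: (eqC_off (a := ord0) (b := b)) => // k h0 hb.
  case: (eqVneq k ord_max) => [->|hm]; first by rewrite E1 E2.
  have := (phiP c1).2 k h0 hb; have := (phiP c2).2 k h0 hb.
  by rewrite E !ffunE (negbTE hm) => -> .
rewrite -(card_in_imset inj); apply: subset_leq_card; apply/subsetP.
move=> _ /imsetP[c _ ->]; rewrite inE (phiP c).1 /=.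
by rewrite (phiP c).2 ?ffunE ?eqxx // eq_sym ?hbm // -(inj_eq val_inj).
Qed.

End Main.

Lemma nat_aux p x : p.+1 * x = p.+1 ^ p -> x = p.+1 ^ (p.+2 - 3).
Proof.
case: p => [|p]; first by rewrite mul1n expn0.
rewrite expnS => /eqP; rewrite eqn_pmul2l // => /eqP ->.
by rewrite subSS subSS subSS subn0.
Qed.

Lemma card_Cj p (C : {set vertex p.+2 p.+1}) (HP : is_1perfect_code C) j :
  #|Cj C j| = p.+1 ^ (p.+2 - 3).
Proof.
have alleq : forall j1 j2, #|Cj C j1| = #|Cj C j2|.
  move=> j1 j2; case: (posnP p) => [p0|hp].
    subst p; by rewrite (ord1 j1) (ord1 j2).
  by apply/eqP; rewrite eqn_leq !(Cj_le HP).
have sumC : #|C| = \sum_(j < p.+1) #|Cj C j|.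
  rewrite -card_bigcup_disj; last first.
    move=> j1 j2 hjk; rewrite disjoints_subset; apply/subsetP => c.
    rewrite !inE => /andP[_ /eqP ->]; by rewrite (negbTE hjk) andbF.
  apply: eq_card => c; apply/idP/bigcupP.
    by move=> Hc; exists (c ord_max) => //; rewrite inE Hc eqxx.
  by case=> j0 _; rewrite inE => /andP[].
apply: nat_aux; rewrite -(cardC HP) sumC (eq_bigr (fun _ => #|Cj C j|)).
  by rewrite sum_nat_const card_ord.
by move=> k _; exact: alleq.
Qed.

Theorem proposition8 (q : nat) (hq : 0 < q) :
  (exists C : {set vertex q.+1 q}, is_1perfect_code C) ->
  exists M : 'I_q -> {set vertex q q},
    (forall i j, i != j -> [disjoint M i & M j]) /\
    (\bigcup_(i < q) M i = [set: vertex q q]) /\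
    (forall i, is_MDS_code 2 (M i)) /\
    (forall i, exists N : 'I_q -> {set vertex q q},
       (forall j, is_MDS_code 3 (N j)) /\
       (forall j k, j != k -> [disjoint N j & N k]) /\
       M i = \bigcup_(j < q) N j).
Proof.
move: hq; case: q => [//|p] _ [C HC].
exists (M C); split; first exact: M_disj.
split; first exact: M_cover.
split.
  move=> i; split; first by rewrite (card_M HC) (cardC HC) subSS subSS subn0.
  move=> x y; exact: M_dist.
move=> i; exists (N C i); split; last split.
- move=> j; split; first by rewrite (card_N HC) (card_Cj HC).
  move=> x y; exact: N_dist.
- move=> j k; exact: N_disj.
- exact: M_N.
Qed.
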